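(* Let $p$ be a prime number and $G$ a transitive group of degree $p$. Then $\#G^{\mathrm{ab}}$ is a multiple of $p$ if and only if $G\cong C_{p}$.
   Context: A transitive group of degree $p$ is a subgroup of $\mathfrak{S}_p$ acting transitively on $p$ points. $G^{\mathrm{ab}}:=G/[G,G]$ is the abelianization. *)

(* Defs.v *)
From mathcomp Require Import all_boot all_fingroup all_solvable zmodp.
Set Implicit Arguments. Unset Strict Implicit. Unset Printing Implicit Defensive.

(* Main.v *)
Require Import Defs.
From mathcomp Require Import all_boot all_fingroup all_solvable zmodp.

Lemma not_dvd_fact (p m : nat) : prime p -> m < p -> ~~ (p %| m`!).
Proof.
move=> pp; elim: m => [|m IH] lt; first by rewrite fact0 dvdn1; apply/eqP => p1; rewrite p1 in pp.
rewrite factS Euclid_dvdM // negb_or IH ?(ltnW lt) // andbT.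
by rewrite gtnNdvd.
Qed.

Lemma not_sq_dvd_fact (p : nat) : prime p -> ~~ (p * p %| p`!).
Proof.
move=> pp; have p0 := prime_gt0 pp.
rewrite -(prednK p0) factS prednK // dvdn_pmul2l //.
by apply: not_dvd_fact; rewrite // prednK.
Qed.

Theorem lemma2p3 (p : nat) (G : {group {perm 'I_p}}) :
  prime p ->
  [transitive G, on [set: 'I_p] | 'P] ->
  ((p %| #|(G / [~: G, G])%g|)%N <-> G \isog Zp p).
Proof.
move=> pp trG; have p0 := prime_gt0 pp.
have nsG' : ([~: G, G] <| G)%g by exact: (der_normal 1 G).
have nG' := normal_norm nsG'.
split; last first.
  move=> iso; have ab : abelian G by rewrite (isog_abelian iso) cyclic_abelian // prime_cyclic // card_Zp.
  have -> : ([~: G, G] = 1)%g by apply/commG1P.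
  by rewrite -(card_isog (quotient1_isog G)) (card_isog iso) card_Zp.
move=> dvd.
have sHG : ([~: G, G] \subset G)%g by apply: der1_subG.
have cardG : #|G| = (#|[~: G, G]%g| * #|(G / [~: G, G])%g|)%N.
  by rewrite card_quotient // Lagrange.
have npH : ~~ (p %| #|[~: G, G]%g|).
  apply/negP => pH; have := not_sq_dvd_fact p pp; apply/negP/negPn.
  have : #|G| %| p`!.
    by rewrite -card_Sn -cardsT; apply: cardSg; apply: subsetT.
  by apply: dvdn_trans; rewrite cardG dvdn_mul.
have x0 : 'I_p := Ordinal p0.
have sizes : forall y, #|orbit 'P [~: G, G]%g y| = #|orbit 'P [~: G, G]%g x0|.
  move=> y; have [g Gg ->] := atransP2 trG (in_setT x0) (in_setT y).
  rewrite -(card_imset (orbit 'P [~: G, G]%g x0) (act_inj 'P g)).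
  apply: eq_card => z.
  rewrite -[z](actKV 'P g) (mem_imset _ _ (act_inj 'P g)).
  by rewrite -{1}((normsP nG') g Gg) orbit_conjsg.
set s := #|orbit 'P [~: G, G]%g x0|.
have acts : [acts [~: G, G]%g, on [set: 'I_p] | 'P].
  by apply/subsetP=> a _; rewrite !inE; apply/subsetP => z; rewrite !inE.
have sp : s %| p.
  suff : s %| #|[set: 'I_p]| by rewrite cardsT card_ord.
  rewrite (@card_uniform_partition _ s _ _ _ (orbit_partition acts)) ?dvdn_mull //.
  by move=> O /imsetP[y _ ->]; apply: sizes.
have s1 : s = 1.
  case/primeP: pp => _ /(_ s sp) /orP[/eqP //| /eqP sp'].
  have := dvdn_orbit 'P [~: G, G]%g x0; rewrite -/s sp' => h.
  by rewrite h in npH.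
have H1 : ([~: G, G] = 1)%g.
  apply/trivgP/subsetP => a Ha; rewrite inE; apply/eqP/permP => y.
  rewrite perm1; have := card_orbit1 (etrans (sizes y) s1).
  move=> O1; have : ('P%act y a \in orbit 'P [~: G, G]%g y) by exact: mem_orbit.
  by rewrite O1 inE => /eqP.
have abG : abelian G by apply/commG1P.
have stab1 : ('C_G[x0 | 'P] = 1)%g.
  apply/trivgP/subsetP => a /setIP[Ga /astab1P ax]; rewrite inE.
  apply/eqP/permP => y; rewrite perm1.
  have [g Gg ->] := atransP2 trG (in_setT x0) (in_setT y).
  by rewrite -!apermE -actM -(centsP abG a Ga g Gg) actM ax.
have cG : #|G| = p.
  by rewrite -(card_orbit_stab 'P G x0) stab1 cards1 muln1 (atransP trG) ?inE // cardsT card_ord.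
have cycG : cyclic G by apply: prime_cyclic; rewrite cG.
by rewrite isog_cyclic_card // prime_cyclic ?card_Zp ?cG //=.
Qed.
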